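(* Let $m,d$ be positive integers, $k$ a field, and in $A=k[x_1,x_2,x_3,x_4]$ let $g_1=-x_1^{4m+d+2}+x_2x_4^{m}$, $g_2=x_1^{5}x_4-x_2^{3}x_3$, $g_3=x_1^{4m+d-1}x_2^{2}-x_3x_4^{m}$. Then $g_1,g_2,g_3$ is a regular sequence in $A$. *)

(* Defs.v *)
From mathcomp Require Import all_boot all_algebra.
From mathcomp Require Export mpoly.
Set Implicit Arguments. Unset Strict Implicit. Unset Printing Implicit Defensive.
Import GRing.Theory.
Local Open Scope ring_scope.

Definition in_ideal (R : comNzRingType) (s : seq R) (f : R) : Prop :=
  exists c : seq R, size c = size s /\ f = \sum_(i < size s) c`_i * s`_i.

Definition regular_seq (R : comNzRingType) (s : seq R) : Prop :=
  (forall (i : nat), (i < size s)%N ->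
     forall f : R, in_ideal (take i s) (f * s`_i) -> in_ideal (take i s) f)
  /\ ~ in_ideal s 1.

(* The variable x_(i+1) of k[x_1,x_2,x_3,x_4], i.e. x1 = var 0, ..., x4 = var 3. *)
Definition var (k : fieldType) (i : nat) : {mpoly k[4]} := 'X_(@inord 3 i).

(* Main.v *)
Require Import Defs.
From mathcomp Require Import all_boot all_algebra.
From mathcomp Require Import mpoly.
From mathcomp Require Import ring.
Set Implicit Arguments. Unset Strict Implicit. Unset Printing Implicit Defensive.
Import GRing.Theory.
Local Open Scope ring_scope.

Section S.
Variable R : comNzRingType.
Local Notation A := {mpoly R[4]}.
Hypothesis hdom : forall p q : A, p * q = 0 -> p = 0 \/ q = 0.

Definition X (i : nat) : A := 'X_(inord i).
Implicit Types (p q x y Y Z : A).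

Lemma mind (P : A -> Prop) : (forall c, P c%:MP) ->
  (forall i, (i < 4)%N -> P (X i)) ->
  (forall p q, P p -> P q -> P (p + q)) ->
  (forall p q, P p -> P q -> P (p * q)) -> forall p, P p.
Proof.
move=> hC hX hD hM; elim/mpolyind => [|c m p _ _ hp].
  by have := hC 0; rewrite mpolyC0.
apply: (hD) => //; rewrite -mul_mpolyC; apply: (hM) => //.
rewrite mpolyXE_id; apply: (big_ind P).
- by have := hC 1; rewrite mpolyC1.
- by move=> x y; apply: (hM).
move=> i _; elim: (m i) => [|n ih].
  by rewrite expr0; have := hC 1; rewrite mpolyC1.
rewrite exprS; apply: (hM) => //.
have := hX i (ltn_ord i); by rewrite /X inord_val.
Qed.

Definition sl (j : nat) (g : A) : 4.-tuple A :=
  [tuple if (i : nat) == j then g else 'X_i | i < 4].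

Lemma sl_var j g i : (i < 4)%N -> X i \mPo sl j g = if i == j then g else X i.
Proof. by move=> hi; rewrite /X comp_mpolyXU -tnth_nth tnth_mktuple inordK. Qed.
Lemma sl_eq j g : (j < 4)%N -> X j \mPo sl j g = g.
Proof. by move=> hj; rewrite sl_var // eqxx. Qed.
Lemma sl_ne j g i : (i < 4)%N -> i != j -> X i \mPo sl j g = X i.
Proof. by move=> hi hij; rewrite sl_var // (negbTE hij). Qed.

Lemma factor j g p : (j < 4)%N -> exists Q, p = (p \mPo sl j g) + (X j - g) * Q.
Proof.
move=> hj; elim/mind: p.
- by move=> c; exists 0; rewrite comp_mpolyC mulr0 addr0.
- move=> i hi; rewrite sl_var //; case: eqP => [->|_].
    by exists 1; ring.
  by exists 0; ring.
- move=> p q [Q1 h1] [Q2 h2]; exists (Q1 + Q2); rewrite rmorphD /=.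
  rewrite {1}h1 {1}h2; ring.
- move=> p q [Q1 h1] [Q2 h2]; exists (Q1 * q + (p \mPo sl j g) * Q2).
  rewrite rmorphM /=.
  have e1 : (X j - g) * Q1 = p - (p \mPo sl j g) by rewrite {1}h1; ring.
  have e2 : (X j - g) * Q2 = q - (q \mPo sl j g) by rewrite {1}h2; ring.
  have -> : (X j - g) * (Q1 * q + (p \mPo sl j g) * Q2) =
     ((X j - g) * Q1) * q + (p \mPo sl j g) * ((X j - g) * Q2) by ring.
  rewrite e1 e2; ring.
Qed.

Lemma mulnz p q : p != 0 -> q != 0 -> p * q != 0.
Proof.
move=> hp hq; apply/eqP => /hdom [h|h].
  by move: hp; rewrite h eqxx.
by move: hq; rewrite h eqxx.
Qed.
Lemma mul0l p q : q != 0 -> p * q = 0 -> p = 0.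
Proof. by move=> hq /hdom [//|/eqP]; rewrite (negbTE hq). Qed.
Lemma mulI p x y : p != 0 -> p * x = p * y -> x = y.
Proof.
move=> hp h; apply/eqP; rewrite -subr_eq0; apply/eqP.
have : p * (x - y) = 0 by rewrite mulrBr h subrr.
by move/hdom => [/eqP|//]; rewrite (negbTE hp).
Qed.
Lemma expnz p n : p != 0 -> p ^+ n != 0.
Proof.
move=> hp; elim: n => [|n ih]; first by rewrite expr0 oner_neq0.
by rewrite exprS mulnz.
Qed.

Lemma var_neq0 i : X i != 0.
Proof.
apply/eqP => h; have := congr1 (meval (fun _ => 1)) h.
by rewrite /X mevalXU meval0 => /eqP; rewrite oner_eq0.
Qed.

Definition vv (l : seq R) := fun j : 'I_4 => nth 0 l j.
Lemma mev_var l i : (i < 4)%N -> meval (vv l) (X i) = nth 0 l i.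
Proof. by move=> hi; rewrite /X mevalXU /vv inordK. Qed.

Lemma var_div i j n Y Z : (i < 4)%N -> (j < 4)%N -> i != j ->
  X i ^+ n * Z = X j * Y -> exists Z', Y = X i ^+ n * Z'.
Proof.
move=> hi hj hij; elim: n Y Z => [|n ih] Y Z.
  by move=> _; exists Y; rewrite expr0 mul1r.
move=> h; have := congr1 (comp_mpoly (sl i 0)) h.
have hji : j != i by rewrite eq_sym.
rewrite !rmorphM rmorphXn /= sl_eq // sl_ne //.
rewrite expr0n /= mul0r => /esym; rewrite mulrC => /(mul0l (var_neq0 j)) hY.
have [Q hQ] := @factor i 0 Y hi; rewrite hY add0r subr0 in hQ.
have h2 : X i * (X i ^+ n * Z) = X i * (X j * Q).
  by rewrite mulrA -exprS h hQ; ring.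
have [Z' hZ'] := ih _ _ (mulI (var_neq0 i) h2).
by exists Z'; rewrite hQ hZ' mulrA -exprS.
Qed.

Variables (m M : nat).
Hypothesis hm : (0 < m)%N.
Local Notation a := (X 0).
Local Notation b := (X 1).
Local Notation c := (X 2).
Local Notation e := (X 3).
Definition Aa : A := a ^+ M.
Definition Ee : A := e ^+ m.
Definition Ff : A := Ee ^+ M.
Definition g1 : A := - (Aa * a ^+ 3) + b * Ee.
Definition g2 : A := a ^+ 5 * e - b ^+ 3 * c.
Definition g3 : A := Aa * b ^+ 2 - c * Ee.
Definition tau := sl 0 (a * Ee).
Definition th : 4.-tuple A :=
  [tuple nth 0 [:: a * Ee; Aa * a ^+ 3 * Ff * Ee ^+ 2; c; e] i | i < 4].
Definition gam : A := Aa ^+ 3 * a ^+ 6 * Ff ^+ 3 * Ee ^+ 3.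
Definition G2 : A := a ^+ 5 * Ee ^+ 3 * e - Aa ^+ 3 * a ^+ 9 * c.
Definition thg2 : A := (a * Ee) ^+ 5 * e - (Aa * a ^+ 3 * Ff * Ee ^+ 2) ^+ 3 * c.
Arguments Aa : simpl never.
Arguments Ee : simpl never.
Arguments Ff : simpl never.
Arguments gam : simpl never.
Arguments thg2 : simpl never.
Arguments G2 : simpl never.

Lemma th_var i : (i < 4)%N ->
  X i \mPo th = nth 0 [:: a * Ee; Aa * a ^+ 3 * Ff * Ee ^+ 2; c; e] i.
Proof. by move=> hi; rewrite /X comp_mpolyXU -tnth_nth tnth_mktuple inordK. Qed.

Lemma th_Ee : Ee \mPo th = Ee.
Proof. by rewrite /Ee rmorphXn /= th_var. Qed.
Lemma th_Ff : Ff \mPo th = Ff.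
Proof. by rewrite /Ff rmorphXn /= th_Ee. Qed.
Lemma th_Aa : Aa \mPo th = Aa * Ff.
Proof. by rewrite /Aa rmorphXn /= th_var // exprMn. Qed.

Lemma tau_Ee : Ee \mPo tau = Ee.
Proof. by rewrite /Ee rmorphXn /= sl_ne. Qed.
Lemma tau_Ff : Ff \mPo tau = Ff.
Proof. by rewrite /Ff rmorphXn /= tau_Ee. Qed.
Lemma tau_Aa : Aa \mPo tau = Aa * Ff.
Proof. by rewrite /Aa rmorphXn /= sl_eq // exprMn. Qed.

Lemma th_g1 : g1 \mPo th = 0.
Proof.
rewrite /g1 rmorphD rmorphN !rmorphM /= th_Aa th_Ee !th_var //=.
by rewrite /Ff; ring.
Qed.

Lemma th_g2 : g2 \mPo th = thg2.
Proof. by rewrite /g2 /thg2 rmorphB !rmorphM /= !th_var //=; ring. Qed.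

Lemma th_g3 : g3 \mPo th = Ee * (gam - c).
Proof.
rewrite /g3 rmorphB !rmorphM /= th_Aa th_Ee !th_var //= /gam.
ring.
Qed.

Lemma tau_G2 : G2 \mPo tau = Ee ^+ 3 * thg2.
Proof.
rewrite /G2 /thg2 rmorphB !rmorphM /= tau_Aa tau_Ee sl_eq // !sl_ne //.
ring.
Qed.

Lemma G2_in : G2 = Ee ^+ 3 * g2 +
   (c * (Ee ^+ 2 * b ^+ 2 + Ee * b * (Aa * a ^+ 3) + (Aa * a ^+ 3) ^+ 2)) * g1.
Proof. rewrite /G2 /g1 /g2; ring. Qed.

Lemma sc_Ee : Ee \mPo sl 2 gam = Ee.
Proof. by rewrite /Ee rmorphXn /= sl_ne. Qed.
Lemma sc_Ff : Ff \mPo sl 2 gam = Ff.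
Proof. by rewrite /Ff rmorphXn /= sc_Ee. Qed.
Lemma sc_Aa : Aa \mPo sl 2 gam = Aa.
Proof. by rewrite /Aa rmorphXn /= sl_ne. Qed.

Lemma sc_gam : gam \mPo sl 2 gam = gam.
Proof. rewrite {2}/gam !rmorphM /= ?rmorphXn /= !sl_ne // /gam /Aa /Ff /Ee; ring. Qed.

Lemma sc_thg2 : thg2 \mPo sl 2 gam =
  a ^+ 5 * Ee ^+ 5 * (e - Aa ^+ 6 * a ^+ 10 * Ff ^+ 6 * Ee ^+ 4).
Proof.
rewrite /thg2 rmorphB !rmorphM /= sc_Ee sc_Ff sc_Aa.
rewrite sl_eq // !sl_ne //.
rewrite /gam; ring.
Qed.

Lemma nzY : e - Aa ^+ 6 * a ^+ 10 * Ff ^+ 6 * Ee ^+ 4 != 0.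
Proof.
have -> : e - Aa ^+ 6 * a ^+ 10 * Ff ^+ 6 * Ee ^+ 4 =
  e - a * (Aa ^+ 6 * a ^+ 9 * Ff ^+ 6 * Ee ^+ 4) by ring.
apply/eqP => h; have := congr1 (meval (vv [:: 0; 0; 0; 1])) h.
rewrite rmorphB (rmorphM _ a) rmorph0 /= !mev_var //= mul0r subr0.
by move/eqP; rewrite oner_eq0.
Qed.

Lemma nz_thg2 : thg2 != 0.
Proof.
apply/eqP => h; have := congr1 (comp_mpoly (sl 2 gam)) h.
rewrite sc_thg2 rmorph0; apply/eqP.
by rewrite !mulnz ?expnz ?var_neq0 ?nzY // /Ee expnz ?var_neq0.
Qed.

Lemma nz_cg : c - gam != 0.
Proof.
have -> : c - gam = c - a * (Aa ^+ 3 * a ^+ 5 * Ff ^+ 3 * Ee ^+ 3) by rewrite /gam; ring.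
apply/eqP => h; have := congr1 (meval (vv [:: 0; 0; 1; 0])) h.
rewrite rmorphB (rmorphM _ a) rmorph0 /= !mev_var //= mul0r subr0.
by move/eqP; rewrite oner_eq0.
Qed.

Lemma nz_g1 : g1 != 0.
Proof.
apply/eqP => h; have := congr1 (meval (vv [:: 1; 0; 0; 0])) h.
rewrite /g1 rmorphD rmorphN (rmorphM _ Aa) (rmorphM _ b) rmorph0 /Aa.
rewrite (rmorphXn _ M) (rmorphXn _ 3) /= !mev_var //= !expr1n mul0r addr0 mulr1.
by move/eqP; rewrite oppr_eq0 oner_eq0.
Qed.


Lemma fixA j g : (j < 4)%N -> j != 0%N -> Aa \mPo sl j g = Aa.
Proof. by move=> hj hj0; rewrite /Aa rmorphXn /= sl_ne // eq_sym. Qed.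
Lemma fixE j g : (j < 4)%N -> j != 3%N -> Ee \mPo sl j g = Ee.
Proof. by move=> hj hj0; rewrite /Ee rmorphXn /= sl_ne // eq_sym. Qed.
Lemma fixF j g : (j < 4)%N -> j != 3%N -> Ff \mPo sl j g = Ff.
Proof. by move=> hj hj0; rewrite /Ff rmorphXn /= fixE. Qed.
Lemma eps_Ee : Ee \mPo sl 3 0 = 0.
Proof. by rewrite /Ee rmorphXn /= sl_eq // expr0n (gtn_eqF hm). Qed.

Lemma eps_g1 : g1 \mPo sl 3 0 = -(Aa * a ^+ 3).
Proof. rewrite /g1 rmorphD rmorphN !rmorphM /= fixA // eps_Ee !sl_ne //; ring. Qed.
Lemma eps_g2 : g2 \mPo sl 3 0 = -(b ^+ 3 * c).
Proof. rewrite /g2 rmorphB !rmorphM /= sl_eq // !sl_ne //; ring. Qed.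

Lemma nzAa3 : Aa * a ^+ 3 != 0.
Proof. by rewrite mulnz // /Aa expnz // var_neq0. Qed.

Lemma L1 f h : e * f = h * g1 -> exists h', f = h' * g1.
Proof.
move=> H; have := congr1 (comp_mpoly (sl 3 0)) H.
rewrite !rmorphM /= sl_eq // eps_g1 mul0r => /esym.
rewrite mulrN => /eqP; rewrite oppr_eq0 => /eqP /(mul0l nzAa3) hh.
have [Q hQ] := @factor 3 0 h isT; rewrite hh add0r subr0 in hQ.
exists Q; apply: (mulI (var_neq0 3)); by rewrite H hQ mulrA.
Qed.

Lemma L1n n f h : e ^+ n * f = h * g1 -> exists h', f = h' * g1.
Proof.
elim: n f h => [|n ih] f h; first by rewrite expr0 mul1r => ->; exists h.
rewrite exprS -mulrA => /L1 [h' /ih]; exact.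
Qed.

Lemma L2 f : exists K F h, F \mPo sl 1 0 = F /\ e ^+ K * f = F + h * g1.
Proof.
elim/mind: f.
- move=> c0; exists 0%N, c0%:MP, 0; split; first by rewrite comp_mpolyC.
  by rewrite expr0 mul1r mul0r addr0.
- move=> i; case: i => [|[|[|[|i]]]] // _.
  + by exists 0%N, a, 0; rewrite sl_ne // expr0 mul1r mul0r addr0.
  + exists m, (Aa * a ^+ 3), 1; split.
      by rewrite rmorphM /= fixA // rmorphXn /= sl_ne.
    by rewrite /g1 /Ee; ring.
  + by exists 0%N, c, 0; rewrite sl_ne // expr0 mul1r mul0r addr0.
  + by exists 0%N, e, 0; rewrite sl_ne // expr0 mul1r mul0r addr0.
- move=> p q [K1 [F1 [h1 [s1 e1]]]] [K2 [F2 [h2 [s2 e2]]]].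
  exists (K1 + K2)%N, (e ^+ K2 * F1 + e ^+ K1 * F2), (e ^+ K2 * h1 + e ^+ K1 * h2).
  split.
    by rewrite rmorphD !rmorphM !rmorphXn /= sl_ne // s1 s2.
  have -> : e ^+ (K1 + K2) * (p + q) = e ^+ K2 * (e ^+ K1 * p) + e ^+ K1 * (e ^+ K2 * q).
    by rewrite exprD; ring.
  rewrite e1 e2; ring.
- move=> p q [K1 [F1 [h1 [s1 e1]]]] [K2 [F2 [h2 [s2 e2]]]].
  exists (K1 + K2)%N, (F1 * F2), (h1 * (e ^+ K2 * q) + F1 * h2).
  split; first by rewrite rmorphM /= s1 s2.
  have -> : e ^+ (K1 + K2) * (p * q) = (e ^+ K1 * p) * (e ^+ K2 * q).
    by rewrite exprD; ring.
  rewrite e1 e2; ring.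
Qed.

Lemma Qs Q : exists D Q0, e ^+ D * Q = Q0 \mPo tau.
Proof.
elim/mind: Q.
- by move=> c0; exists 0%N, c0%:MP; rewrite comp_mpolyC expr0 mul1r.
- move=> i; case: i => [|[|[|[|i]]]] // _.
  + by exists m, a; rewrite /tau sl_eq // /Ee mulrC.
  + by exists 0%N, b; rewrite /tau sl_ne // expr0 mul1r.
  + by exists 0%N, c; rewrite /tau sl_ne // expr0 mul1r.
  + by exists 0%N, e; rewrite /tau sl_ne // expr0 mul1r.
- move=> p q [D1 [Q1 h1]] [D2 [Q2 h2]].
  exists (D1 + D2)%N, (e ^+ D2 * Q1 + e ^+ D1 * Q2).
  rewrite rmorphD !rmorphM !rmorphXn /= /tau sl_ne // -/tau -h1 -h2 exprD; ring.
- move=> p q [D1 [Q1 h1]] [D2 [Q2 h2]].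
  exists (D1 + D2)%N, (Q1 * Q2).
  rewrite rmorphM /= -h1 -h2 exprD; ring.
Qed.

Lemma Tcomp F : F \mPo sl 1 0 = F -> F \mPo th = F \mPo tau.
Proof.
have key : forall p, (p \mPo sl 1 0) \mPo th = (p \mPo sl 1 0) \mPo tau.
  elim/mind.
  - by move=> c0; rewrite !comp_mpolyC.
  - move=> i; case: i => [|[|[|[|i]]]] // _.
    + by rewrite sl_ne // th_var // /tau sl_eq.
    + by rewrite sl_eq // !rmorph0.
    + by rewrite sl_ne // th_var // /tau sl_ne.
    + by rewrite sl_ne // th_var // /tau sl_ne.
  - by move=> p q h1 h2; rewrite !rmorphD /= h1 h2.
  - by move=> p q h1 h2; rewrite !rmorphM /= h1 h2.
by move=> hF; rewrite -hF key.
Qed.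

Lemma tau_eps G : (G \mPo tau) \mPo sl 0 0 = G \mPo sl 0 0.
Proof.
elim/mind: G.
- by move=> c0; rewrite !comp_mpolyC.
- move=> i; case: i => [|[|[|[|i]]]] // _.
  + by rewrite /tau sl_eq // rmorphM /= sl_eq // mul0r.
  + by rewrite /tau !sl_ne.
  + by rewrite /tau !sl_ne.
  + by rewrite /tau !sl_ne.
- by move=> p q h1 h2; rewrite !rmorphD /= h1 h2.
- by move=> p q h1 h2; rewrite !rmorphM /= h1 h2.
Qed.

Lemma descent n F : F \mPo tau = 0 -> exists G, F = a ^+ n * G /\ G \mPo tau = 0.
Proof.
move=> hF; elim: n => [|n [G [hG hGt]]]; first by exists F; rewrite expr0 mul1r.
have h0 : G \mPo sl 0 0 = 0 by rewrite -tau_eps hGt rmorph0.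
have [G' hG'] := @factor 0 0 G isT; rewrite h0 add0r subr0 in hG'.
exists G'; split; first by rewrite hG hG' exprS; ring.
have nzaE : a * Ee != 0 by rewrite mulnz ?var_neq0 // /Ee expnz ?var_neq0.
move: hGt; rewrite hG' rmorphM /= /tau sl_eq // -/tau mulrC.
exact: mul0l nzaE.
Qed.

Lemma msize_apow n : msize (a ^+ n) = n.+1.
Proof. by rewrite /X mpolyXn msizeX mdegMn mdeg1 mul1n. Qed.
Lemma mleadc_apow n : mleadc (a ^+ n) = 1.
Proof. by rewrite /X mpolyXn mleadXm mcoeffX eqxx. Qed.

Lemma Tinj F : F \mPo tau = 0 -> F = 0.
Proof.
move=> hF; apply/eqP; apply/negPn/negP => nzF.
have [G [hG _]] := descent (msize F) hF.
have nzG : G != 0 by apply/eqP => hG0; move: nzF; rewrite hG hG0 mulr0 eqxx.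
have := congr1 (fun p => msize p) hG; rewrite /= msizeM_proper; last first.
  by rewrite mleadc_apow mul1r mleadc_eq0.
rewrite msize_apow addSn /=.
have : (0 < msize G)%N by rewrite lt0n msize_poly_eq0.
by case: (msize G) => // s _ /eqP; rewrite -{1}(addn0 (msize F)) eqn_add2l.
Qed.


Lemma L4 f p q : e * f = p * g1 + q * g2 -> exists p' q', f = p' * g1 + q' * g2.
Proof.
move=> H; have := congr1 (comp_mpoly (sl 3 0)) H.
rewrite rmorphD !rmorphM /= sl_eq // eps_g1 eps_g2 mul0r.
have [P1 hP] := @factor 3 0 p isT; have [Q1 hQ] := @factor 3 0 q isT.
move: (p \mPo sl 3 0) (q \mPo sl 3 0) hP hQ => p0 q0 hP hQ H0.
have H1 : a ^+ (M + 3) * (- p0) = b * (b * (b * (c * q0))).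
  have : a ^+ (M + 3) * (- p0) - b * (b * (b * (c * q0))) =
         p0 * - (Aa * a ^+ 3) + q0 * - (b ^+ 3 * c) by rewrite exprD -/Aa; ring.
  by rewrite -H0 => /eqP; rewrite subr_eq0 => /eqP.
have [Z1 hZ1] := var_div (i:=0) (j:=1) isT isT isT H1.
have [Z2 hZ2] := var_div (i:=0) (j:=1) isT isT isT (esym hZ1).
have [Z3 hZ3] := var_div (i:=0) (j:=1) isT isT isT (esym hZ2).
have [Z4 hZ4] := var_div (i:=0) (j:=2) isT isT isT (esym hZ3).
have hp0 : - p0 = b ^+ 3 * c * Z4.
  apply: (mulI (expnz (M + 3) (var_neq0 0))); rewrite H1 hZ4; ring.
have hq0 : q0 = Aa * a ^+ 3 * Z4 by rewrite hZ4 exprD.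
have hE : Ee = e * e ^+ m.-1 by rewrite /Ee -exprS prednK.
exists (- Z4 * a ^+ 5 + P1), (Z4 * b * e ^+ m.-1 + Q1).
apply: (mulI (var_neq0 3)); rewrite H hP hQ hq0.
have -> : p0 = - (b ^+ 3 * c * Z4) by rewrite -hp0 opprK.
rewrite /g1 /g2 hE; ring.
Qed.

Lemma L4n n f p q : e ^+ n * f = p * g1 + q * g2 -> exists p' q', f = p' * g1 + q' * g2.
Proof.
elim: n f p q => [|n ih] f p q; first by rewrite expr0 mul1r => ->; exists p, q.
rewrite exprS -mulrA => /L4 [p' [q' /ih]]; exact.
Qed.

Lemma Main1 f h : f * g2 = h * g1 -> exists h', f = h' * g1.
Proof.
move=> H; have [K [F [h1 [sF eF]]]] := L2 f.
have hth : f \mPo th = 0.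
  have := congr1 (comp_mpoly th) H; rewrite !rmorphM /= th_g1 th_g2 mulr0.
  exact: mul0l nz_thg2.
have hF : F \mPo tau = 0.
  rewrite -Tcomp //.
  have -> : F = e ^+ K * f - h1 * g1 by rewrite eF; ring.
  by rewrite rmorphB !rmorphM /= hth th_g1 !mulr0 subr0.
move: eF; rewrite (Tinj hF) add0r; exact: L1n.
Qed.

Lemma nz_scthg2 : thg2 \mPo sl 2 gam != 0.
Proof. by rewrite sc_thg2 !mulnz ?expnz ?var_neq0 ?nzY // /Ee expnz ?var_neq0. Qed.

Lemma Main2 f p q : f * g3 = p * g1 + q * g2 -> exists p' q', f = p' * g1 + q' * g2.
Proof.
move=> H; have [K [F [h1 [sF eF]]]] := L2 f.
have [q1 Hq1] : exists q1, q1 = e ^+ K * q by eexists.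
have HF : F * g3 = (e ^+ K * p - h1 * g3) * g1 + q1 * g2.
  have -> : F = e ^+ K * f - h1 * g1 by rewrite eF; ring.
  have -> : (e ^+ K * f - h1 * g1) * g3 = e ^+ K * (f * g3) - h1 * g1 * g3 by ring.
  by rewrite H Hq1; ring.
have HT := congr1 (comp_mpoly th) HF.
rewrite rmorphD !rmorphM /= th_g1 mulr0 add0r th_g3 th_g2 (Tcomp sF) in HT.
have HS := congr1 (comp_mpoly (sl 2 gam)) HT.
rewrite !rmorphM rmorphB /= sl_eq // sc_gam subrr !mulr0 in HS.
have hq1 : (q1 \mPo th) \mPo sl 2 gam = 0.
  by apply: (mul0l nz_scthg2); rewrite -HS.
have [Q hQ] := @factor 2 gam (q1 \mPo th) isT; rewrite hq1 add0r in hQ.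
have H2 : (c - gam) * (Ee * (F \mPo tau) + Q * thg2) = 0.
  have : (c - gam) * (Ee * (F \mPo tau) + Q * thg2) =
    - ((F \mPo tau) * (Ee * (gam - c))) + (c - gam) * Q * thg2 by ring.
  by rewrite HT hQ; move=> ->; ring.
have H3 : Ee * (F \mPo tau) + Q * thg2 = 0.
  by move: H2; rewrite mulrC; exact: mul0l nz_cg.
have [D [Q0 hQ0]] := Qs Q.
have H4 : (e ^+ D * Ee ^+ 4 * F + Q0 * G2) \mPo tau = 0.
  rewrite rmorphD !rmorphM /= tau_G2 -hQ0.
  rewrite rmorphXn /= /tau sl_ne // -/tau tau_Ee.
  have -> : e ^+ D * Ee ^+ 4 * (F \mPo tau) + e ^+ D * Q * (Ee ^+ 3 * thg2) =
    e ^+ D * Ee ^+ 3 * (Ee * (F \mPo tau) + Q * thg2) by ring.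
  by rewrite H3 mulr0.
have H5 := Tinj H4.
apply: (@L4n (D + m * 4 + K) f (e ^+ D * Ee ^+ 4 * h1 -
   Q0 * (c * (Ee ^+ 2 * b ^+ 2 + Ee * b * (Aa * a ^+ 3) + (Aa * a ^+ 3) ^+ 2)))
   (- Q0 * Ee ^+ 3)).
have -> : e ^+ (D + m * 4 + K) * f = e ^+ D * Ee ^+ 4 * (e ^+ K * f).
  by rewrite !exprD exprM -/Ee; ring.
rewrite eF.
have -> : e ^+ D * Ee ^+ 4 * (F + h1 * g1) =
   (e ^+ D * Ee ^+ 4 * F + Q0 * G2) - Q0 * G2 + e ^+ D * Ee ^+ 4 * h1 * g1 by ring.
rewrite H5 G2_in; ring.
Qed.


Lemma in0 x : in_ideal [::] x <-> x = 0.
Proof.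
split; first by move=> [cs [_ ->]]; rewrite big_ord0.
by move=> ->; exists [::]; rewrite big_ord0.
Qed.
Lemma in1 u x : in_ideal [:: u] x <-> exists h, x = h * u.
Proof.
split; first by move=> [cs [_ ->]]; exists cs`_0; rewrite big_ord1.
by move=> [h ->]; exists [:: h]; rewrite big_ord1.
Qed.
Lemma in2 u v x : in_ideal [:: u; v] x <-> exists p q, x = p * u + q * v.
Proof.
split; first by move=> [cs [_ ->]]; exists cs`_0, cs`_1; rewrite !big_ord_recl big_ord0 addr0.
by move=> [p [q ->]]; exists [:: p; q]; rewrite !big_ord_recl big_ord0 addr0.
Qed.

Lemma main_R : regular_seq [:: g1; g2; g3].
Proof.
split.
  move=> i; case: i => [|[|[|i]]] // _ f /=.
  - move/in0 => H; apply/in0; exact: mul0l nz_g1 H.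
  - by move/in1 => [h /Main1 [h' ->]]; apply/in1; exists h'.
  - by move/in2 => [p [q /Main2 [p' [q' ->]]]]; apply/in2; exists p', q'.
move=> [cs [_ H]]; have := congr1 (meval (vv [:: 0; 0; 0; 0])) H.
rewrite rmorph1 !big_ord_recl big_ord0 addr0 /= !rmorphD !(rmorphM _ (cs`_ _)) /=.
have h1 : meval (vv [:: 0; 0; 0; 0]) g1 = 0.
  rewrite /g1 rmorphD rmorphN (rmorphM _ Aa) (rmorphM _ b) /= mev_var //= mul0r addr0.
  by rewrite (rmorphXn _ 3) /= mev_var //= expr0n /= mulr0 oppr0.
have h2 : meval (vv [:: 0; 0; 0; 0]) g2 = 0.
  rewrite /g2 rmorphB (rmorphM _ (a ^+ 5)) (rmorphM _ (b ^+ 3)) /= !mev_var //.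
  by rewrite !mulr0 subrr.
have h3 : meval (vv [:: 0; 0; 0; 0]) g3 = 0.
  rewrite /g3 rmorphB (rmorphM _ Aa) (rmorphM _ c) /= !mev_var //.
  by rewrite (rmorphXn _ 2) /= mev_var // expr0n mulr0 mul0r subrr.
rewrite h1 h2 h3 !mulr0 !addr0 => /eqP; by rewrite oner_eq0.
Qed.

End S.

Unset Implicit Arguments.
Set Strict Implicit.

Theorem lemma5p3 (k : fieldType) (m d : nat) (hm : (0 < m)%N) (hd : (0 < d)%N) :
  regular_seq
    [:: - var k 0 ^+ (4 * m + d + 2) + var k 1 * var k 3 ^+ m;
        var k 0 ^+ 5 * var k 3 - var k 1 ^+ 3 * var k 2;
        var k 0 ^+ (4 * m + d - 1) * var k 1 ^+ 2 - var k 2 * var k 3 ^+ m].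
Proof.
have hN : (4 * m + d + 2 = (4 * m + d - 1) + 3)%N.
  by rewrite addnBAC ?addnA // ?addn_gt0 ?hd ?orbT // -addnBA // subSS subn0.
rewrite hN exprD.
have hdom : forall p q : {mpoly (k : comNzRingType)[4]}, p * q = 0 -> p = 0 \/ q = 0.
  by move=> p q /eqP; rewrite mulf_eq0 => /orP [] /eqP; [left|right].
exact: (@main_R k hdom m (4 * m + d - 1) hm).
Qed.
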